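(* Let $\mathbf A$ be regular of bandwidth $(p,q)$, $\sigma=d\tau-\dim\ker\mathbf A$, and let $L\le R$ be finite integers with $N=R-L+1\ge 2\sigma+\tau$. Then $$\mathcal M_{L,R}=\mathbf P_{L,R}\ker\mathbf A\oplus\mathcal F_L^-\oplus\mathcal F_R^+ .$$
   Context: Fix $d\ge1$. $\mathcal V^S_d$: doubly infinite sequences $\Psi=\{\psi_j\}_{j\in\mathbb Z}$, $\psi_j\in\mathbb C^d$. A matrix Laurent polynomial of bandwidth $(p,q)$ is $\sum_{r=p}^qa_rw^r$, integers $p\le q$, $a_r$ complex $d\times d$, $a_p\ne0\ne a_q$; its BBL transformation is $(\mathbf A\Psi)_j=\sum_ra_r\psi_{j+r}$; $\mathbf T$ is the left shift $(\mathbf T\Psi)_j=\psi_{j+1}$, $\mathbf T^{-1}$ the right shift. $\mathbf A$ is regular if $\det(w^{-p}A(w,w^{-1}))$ is not the zero polynomial (then $\ker\mathbf A$ is finite-dimensional). $p'=\min(p,0)$, $q'=\max(0,q)$, $\tau=q'-p'$. For $-\infty\le L\le R\le\infty$: $\mathcal V_{L,R}$ = sequences with $\psi_j=0$ for $j\notin[L,R]$; $\mathbf P_{L,R}$ = projection onto $\mathcal V_{L,R}$ zeroing entries outside $[L,R]$; bulk solution space $\mathcal M_{L,R}=\ker(\mathbf P_{L-p',R-q'}\mathbf A|_{\mathcal V_{L,R}})$ (infinite endpoints stay infinite). Define $\mathcal F_L^-=\{\Psi\in\mathcal M_{L,\infty}: (\mathbf P_{L,\infty}\mathbf T)^k\Psi=0\text{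 for some }k\ge1\}$ and $\mathcal F_R^+=\{\Psi\in\mathcal M_{-\infty,R}: (\mathbf P_{-\infty,R}\mathbf T^{-1})^k\Psi=0\text{ for some }k\ge1\}$; these are finitely supported sequences, regarded as elements of $\mathcal V_{L,R}$. *)

(* Defs.v *)
From HB Require Import structures.
From mathcomp Require Import all_boot all_order all_algebra.
Set Implicit Arguments. Unset Strict Implicit. Unset Printing Implicit Defensive.
Import Order.TTheory GRing.Theory Num.Theory.
Local Open Scope ring_scope.

Section BBL.
Variables (F : numClosedFieldType) (d : nat).

Definition dseq := int -> 'cV[F]_d.

Definition bw (p q : int) : nat := `|q - p|%N.

Definition bbl (a : int -> 'M[F]_d) (p q : int) (psi : dseq) : dseq :=
  fun j => \sum_(i < (bw p q).+1) a (p + i%:Z) *m psi (j + (p + i%:Z)).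

(* w^{-p} A(w, w^{-1}) as a matrix polynomial *)
Definition symb_poly (a : int -> 'M[F]_d) (p q : int) : 'M[{poly F}]_d :=
  \matrix_(i, k) \sum_(r < (bw p q).+1) (a (p + r%:Z) i k)%:P * 'X^r.

Definition regular (a : int -> 'M[F]_d) (p q : int) : Prop :=
  \det (symb_poly a p q) != 0.

Definition shiftL (psi : dseq) : dseq := fun j => psi (j + 1).
Definition shiftR (psi : dseq) : dseq := fun j => psi (j - 1).

Definition Pfin (L R : int) (psi : dseq) : dseq :=
  fun j => if (L <= j) && (j <= R) then psi j else 0.
Definition Pge (L : int) (psi : dseq) : dseq :=
  fun j => if L <= j then psi j else 0.
Definition Ple (R : int) (psi : dseq) : dseq :=
  fun j => if j <= R then psi j else 0.

Definition pp (p : int) : int := Num.min p 0.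
Definition qq (q : int) : int := Num.max 0 q.
Definition tau (p q : int) : int := qq q - pp p.

Definition kerA a p q (psi : dseq) : Prop := forall j, bbl a p q psi j = 0.

Definition Mfin a p q (L R : int) (psi : dseq) : Prop :=
  Pfin L R psi = psi /\ Pfin (L - pp p) (R - qq q) (bbl a p q psi) = (fun _ => 0).
Definition Mge a p q (L : int) (psi : dseq) : Prop :=
  Pge L psi = psi /\ Pge (L - pp p) (bbl a p q psi) = (fun _ => 0).
Definition Mle a p q (R : int) (psi : dseq) : Prop :=
  Ple R psi = psi /\ Ple (R - qq q) (bbl a p q psi) = (fun _ => 0).

Definition FLminus a p q (L : int) (psi : dseq) : Prop :=
  Mge a p q L psi /\
  exists k : nat, (0 < k)%N /\ iter k (fun f => Pge L (shiftL f)) psi = (fun _ => 0).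
Definition FRplus a p q (R : int) (psi : dseq) : Prop :=
  Mle a p q R psi /\
  exists k : nat, (0 < k)%N /\ iter k (fun f => Ple R (shiftR f)) psi = (fun _ => 0).

Definition PkerA a p q (L R : int) (psi : dseq) : Prop :=
  exists phi, kerA a p q phi /\ psi = Pfin L R phi.

Definition has_dim (S : dseq -> Prop) (n : nat) : Prop :=
  exists b : 'I_n -> dseq,
    (forall i, S (b i)) /\
    (forall c : 'I_n -> F, (forall j, \sum_(i < n) c i *: b i j = 0) -> forall i, c i = 0) /\
    (forall psi, S psi -> exists c : 'I_n -> F, forall j, psi j = \sum_(i < n) c i *: b i j).

Definition direct_sum3 (M U V W : dseq -> Prop) : Prop :=
  (forall psi, M psi <-> exists u v w, [/\ U u, V v, W w & psi = (fun j => u j + v j + w j)]) /\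
  (forall u v w, U u -> V v -> W w -> (fun j => u j + v j + w j) = (fun _ => 0) ->
     [/\ u = (fun _ => 0), v = (fun _ => 0) & w = (fun _ => 0)]).

End BBL.

(* Main.v *)
Require Import Defs.
From HB Require Import structures.
From mathcomp Require Import all_boot all_order all_algebra.
From mathcomp Require Import zify ring lra.
From Stdlib Require Import FunctionalExtensionality Classical IndefiniteDescription.
Set Implicit Arguments. Unset Strict Implicit. Unset Printing Implicit Defensive.
Import Order.TTheory GRing.Theory Num.Theory.
Local Open Scope ring_scope.

Section Main.
Variables (F : numClosedFieldType) (d : nat) (a : int -> 'M[F]_d) (p q : int).
Hypothesis hpq : p <= q.

Local Notation dseq := (dseq F d).
Local Notation bbl := (bbl a p q).

Lemma pp_le : pp p <= p /\ pp p <= 0.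
Proof. rewrite /pp; split; lia. Qed.
Lemma qq_ge : q <= qq q /\ 0 <= qq q.
Proof. rewrite /qq; split; lia. Qed.

Lemma bbl_local (psi phi : dseq) j :
  (forall i, j + pp p <= i -> i <= j + qq q -> psi i = phi i) -> bbl psi j = bbl phi j.
Proof.
move=> h; apply: eq_bigr => -[i hi] _ /=; congr (_ *m _); apply: h.
  have [h1 h2] := pp_le; lia.
have [h1 h2] := qq_ge; move: hi; rewrite /bw => hi.
have hpq' := hpq; lia.
Qed.

Definition sh (m : int) (psi : dseq) : dseq := fun i => psi (i + m).

Lemma bbl_sh psi m j : bbl (sh m psi) j = bbl psi (j + m).
Proof. by apply: eq_bigr => i _; rewrite /sh; congr (_ *m psi _); ring. Qed.

Lemma bbl_add (psi phi : dseq) j : bbl (fun i => psi i + phi i) j = bbl psi j + bbl phi j.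
Proof. by rewrite /Defs.bbl -big_split; apply: eq_bigr => i _; rewrite mulmxDr. Qed.

Lemma bbl_scale c (psi : dseq) j : bbl (fun i => c *: psi i) j = c *: bbl psi j.
Proof. by rewrite /Defs.bbl scaler_sumr; apply: eq_bigr => i _; rewrite scalemxAr. Qed.

Lemma bbl0 j : bbl (fun _ => 0) j = 0.
Proof. by rewrite /Defs.bbl big1 // => i _; rewrite mulmx0. Qed.

Lemma bbl_sum m (c : 'I_m -> F) (g : 'I_m -> dseq) j :
  bbl (fun i => \sum_(l < m) c l *: g l i) j = \sum_(l < m) c l *: bbl (g l) j.
Proof.
rewrite /Defs.bbl; under eq_bigr do rewrite mulmx_sumr.
rewrite exchange_big /=; apply: eq_bigr => l _; rewrite scaler_sumr.
by apply: eq_bigr => i _; rewrite scalemxAr.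
Qed.

Definition t := `|tau p q|%N.
Lemma t_eq : (t : int) = qq q - pp p.
Proof. have [h1 h2] := pp_le; have [h3 h4] := qq_ge; rewrite /t /tau; lia. Qed.

Section Kernel.
Variable k : nat.
Hypothesis hk : has_dim (kerA a p q) k.

Lemma ker_dep (g : 'I_k.+1 -> dseq) : (forall l, kerA a p q (g l)) ->
  exists c : 'I_k.+1 -> F, (exists l, c l != 0) /\ forall j, \sum_l c l *: g l j = 0.
Proof.
move=> hg; case: hk => b [hb [hind hspan]].
have [e he] : exists e : 'I_k.+1 -> 'I_k -> F, forall l j, g l j = \sum_(i < k) e l i *: b i j.
  apply: (@fin_all_exists _ (fun _ => 'I_k -> F) (fun l e => forall j, g l j = \sum_(i < k) e i *: b i j)).
  by move=> l; exact: hspan.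
pose C : 'M[F]_(k.+1, k) := \matrix_(l, i) e l i.
have hK : kermx C != 0.
  rewrite kermx_eq0 /row_free; apply/negP => /eqP hr.
  by have := rank_leq_col C; rewrite hr ltnn.
have [|/existsPn h] := boolP [exists l0, exists i0, kermx C l0 i0 != 0]; last first.
  exfalso; move/eqP: hK; apply; apply/matrixP => x y; rewrite [RHS]mxE; apply/eqP.
  by have /existsPn /(_ y) := h x; rewrite negbK.
case/existsP => l0 /existsP [i0 hli].
pose c := row l0 (kermx C).
have hc : c *m C = 0 by rewrite /c -row_mul mulmx_ker row0.
exists (fun l => c 0 l); split; first by exists i0; rewrite /c mxE.
move=> j; under eq_bigr do rewrite he scaler_sumr.
rewrite exchange_big /= big1 // => i _.
have := congr1 (fun M : 'M[F]_(1,k) => M 0 i) hc; rewrite !mxE => h0.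
rewrite -[RHS](scale0r (b i j)) -h0 scaler_suml; apply: eq_bigr => l _.
by rewrite /C !mxE scalerA.
Qed.

Lemma ker_shift_contra (phi : dseq) (s m0 : int) : s * s = 1 -> kerA a p q phi -> phi m0 != 0 ->
  (forall i, s * (i - m0) < 0 -> phi i = 0) -> False.
Proof.
move=> hs hphi hm0 hz.
pose g (l : 'I_k.+1) := sh (s * l%:Z) phi.
have hg : forall l, kerA a p q (g l) by move=> l j; rewrite bbl_sh.
have [c [[l0 hl0] hc]] := ker_dep hg.
case: (@arg_maxnP _ l0 (fun l => c l != 0) (fun l : 'I_k.+1 => l : nat) hl0) => ls hls hmax.
have := hc (m0 - s * ls%:Z); rewrite (bigD1 ls) //= big1.
  rewrite addr0 /g /sh => /eqP; rewrite scaler_eq0 (negbTE hls) /=.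
  have -> : m0 - s * ls%:Z + s * ls%:Z = m0 by ring.
  by rewrite (negbTE hm0).
move=> l hl; rewrite /g /sh; have [->|cl] := eqVneq (c l) 0; first by rewrite scale0r.
have hle := hmax l cl; have hne : (l : nat) != ls by [].
rewrite hz ?scaler0 //.
have -> : m0 - s * ls%:Z + s * l%:Z - m0 = s * (l%:Z - ls%:Z) by ring.
rewrite mulrA hs mul1r; lia.
Qed.


Lemma ker_left0 (phi : dseq) (M : int) : kerA a p q phi ->
  (forall i, i <= M -> phi i = 0) -> forall i, phi i = 0.
Proof.
move=> hphi hM i1; apply/eqP; apply: contraT => hi1.
have hi1M : M < i1 by case: (lerP i1 M) => // /hM h; rewrite h eqxx in hi1.
have ex : exists n : nat, phi (M + 1 + n%:Z) != 0.
  by exists (absz (i1 - M - 1)%R); have -> : M + 1 + (absz (i1 - M - 1)%R)%:Z = i1 by lia.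
case: (ex_minnP ex) => n0 hn0 hmin.
exfalso; apply: (@ker_shift_contra phi 1 (M + 1 + n0%:Z)) => //.
move=> i; rewrite mul1r => hi.
case: (lerP i M) => [/hM //|hiM].
apply/eqP; apply: contraT => hne.
have := hmin (absz (i - M - 1)%R); have -> : M + 1 + (absz (i - M - 1)%R)%:Z = i by lia.
move=> /(_ hne); lia.
Qed.

Lemma ker_right0 (phi : dseq) (M : int) : kerA a p q phi ->
  (forall i, M <= i -> phi i = 0) -> forall i, phi i = 0.
Proof.
move=> hphi hM i1; apply/eqP; apply: contraT => hi1.
have hi1M : i1 < M by case: (lerP M i1) => // /hM h; rewrite h eqxx in hi1.
have ex : exists n : nat, phi (M - 1 - n%:Z) != 0.
  by exists (absz (M - 1 - i1)%R); have -> : M - 1 - (absz (M - 1 - i1)%R)%:Z = i1 by lia.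
case: (ex_minnP ex) => n0 hn0 hmin.
exfalso; apply: (@ker_shift_contra phi (-1) (M - 1 - n0%:Z)) => //.
move=> i hi; have {}hi : M - 1 - n0%:Z < i by lia.
case: (lerP M i) => [/hM //|hiM].
apply/eqP; apply: contraT => hne.
have := hmin (absz (M - 1 - i)%R); have -> : M - 1 - (absz (M - 1 - i)%R)%:Z = i by lia.
move=> /(_ hne); lia.
Qed.

Lemma ker_win0 (phi : dseq) (c : int) : kerA a p q phi ->
  (forall i, c <= i -> i < c + t%:Z -> phi i = 0) -> forall i, phi i = 0.
Proof.
move=> hphi hw.
have ht := t_eq; have [h1 h2] := pp_le; have [h3 h4] := qq_ge.
pose lo : dseq := fun i => if i < c then phi i else 0.
pose hi : dseq := fun i => if c + t%:Z <= i then phi i else 0.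
have hlo : kerA a p q lo.
  move=> j; case: (ltrP (j + pp p) c) => hj.
    rewrite -(hphi j); apply: bbl_local => i hi1 hi2; rewrite /lo.
    case: ifP => // /negbT; rewrite -leNgt => hci; rewrite hw //; lia.
  rewrite -(bbl0 j); apply: bbl_local => i hi1 hi2; rewrite /lo ifF //; lia.
have hhi : kerA a p q hi.
  move=> j; case: (ltrP (j + pp p) c) => hj.
    rewrite -(bbl0 j); apply: bbl_local => i hi1 hi2; rewrite /hi ifF //; lia.
  rewrite -(hphi j); apply: bbl_local => i hi1 hi2; rewrite /hi.
  case: ifP => // /negbT; rewrite -ltNge => h; rewrite hw //; lia.
have z1 := ker_right0 (M := c) hlo.
have z2 := ker_left0 (M := c + t%:Z - 1) hhi.
move=> i; case: (ltrP i c) => hic.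
  by have := z1 _ i; rewrite /lo hic; apply => j hj; rewrite ifF //; lia.
case: (ltrP i (c + t%:Z)) => hit; first exact: hw.
have := z2 _ i; rewrite /hi ifT //; apply => j hj; rewrite ifF //; lia.
Qed.

End Kernel.

Definition emb (L0 : int) (n : nat) (psi : dseq) : 'rV[F]_(n * d) :=
  mxvec (\matrix_(i < n, al < d) psi (L0 + i%:Z) al 0).
Definition unemb (L0 : int) (n : nat) (u : 'rV[F]_(n * d)) : dseq :=
  fun j => \sum_(i < n) if L0 + i%:Z == j then (row i (vec_mx u))^T else 0.

Lemma unemb_at L0 n (u : 'rV[F]_(n * d)) (i : 'I_n) : unemb L0 u (L0 + i%:Z) = (row i (vec_mx u))^T.
Proof.
rewrite /unemb (bigD1 i) //= eqxx big1 ?addr0 // => i' hi'.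
by rewrite ifF //; apply/negbTE; apply: contra hi' => /eqP h; apply/eqP/val_inj => /=; lia.
Qed.

Lemma unemb_out L0 n (u : 'rV[F]_(n * d)) j : ~~ ((L0 <= j) && (j < L0 + n%:Z)) -> unemb L0 u j = 0.
Proof.
move=> h; rewrite /unemb big1 // => i _; rewrite ifF //; apply/negbTE.
apply: contra h => /eqP <-; have := ltn_ord i; lia.
Qed.

Lemma emb_unemb L0 n (u : 'rV[F]_(n * d)) : emb L0 n (unemb L0 u) = u.
Proof.
rewrite /emb -[RHS]vec_mxK; congr mxvec; apply/matrixP => i al.
by rewrite mxE unemb_at !mxE.
Qed.

Lemma unemb_emb L0 n psi j : unemb L0 (emb L0 n psi) j =
  if (L0 <= j) && (j < L0 + n%:Z) then psi j else 0.
Proof.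
case: ifP => h; last by rewrite unemb_out // h.
have hi : (absz (j - L0) < n)%N by lia.
have hj : j = L0 + (Ordinal hi : nat)%:Z by rewrite /=; lia.
rewrite [in LHS]hj unemb_at /emb mxvecK; apply/matrixP => x y.
by rewrite !mxE -hj (ord1 y).
Qed.

Lemma emb_ext L0 n (psi phi : dseq) : (forall j, L0 <= j -> j < L0 + n%:Z -> psi j = phi j) ->
  emb L0 n psi = emb L0 n phi.
Proof.
move=> h; rewrite /emb; congr mxvec; apply/matrixP => i al; rewrite !mxE h //.
  lia.
have := ltn_ord i; lia.
Qed.

Lemma emb_lin L0 n c (psi phi : dseq) :
  emb L0 n (fun j => c *: psi j + phi j) = c *: emb L0 n psi + emb L0 n phi.
Proof.
rewrite /emb -linearZ -linearD; congr mxvec; apply/matrixP => i al; by rewrite !mxE.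
Qed.

Lemma emb_sum L0 n m (c : 'I_m -> F) (g : 'I_m -> dseq) :
  emb L0 n (fun j => \sum_(l < m) c l *: g l j) = \sum_(l < m) c l *: emb L0 n (g l).
Proof.
rewrite /emb; under [RHS]eq_bigr do rewrite -linearZ.
rewrite -linear_sum; congr mxvec; apply/matrixP => i al; rewrite !mxE !summxE.
by apply: eq_bigr => l _; rewrite !mxE.
Qed.

Lemma emb0 L0 n : emb L0 n (fun _ => 0) = 0.
Proof. by rewrite /emb -[RHS](linear0 (@mxvec _ n d)); congr mxvec; apply/matrixP => i al; rewrite !mxE. Qed.

Lemma unemb_lin L0 n c (u v : 'rV[F]_(n * d)) j :
  unemb L0 (c *: u + v) j = c *: unemb L0 u j + unemb L0 v j.
Proof.
rewrite /unemb scaler_sumr -big_split; apply: eq_bigr => i _.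
case: ifP => _ /=; last by rewrite scaler0 addr0.
by rewrite linearD linearZ /= linearD linearZ /= linearD linearZ.
Qed.

Lemma emb_eq0 L0 n psi : emb L0 n psi = 0 -> forall j, L0 <= j -> j < L0 + n%:Z -> psi j = 0.
Proof.
move=> h j h1 h2; have := unemb_emb L0 n psi j; rewrite h1 h2 /= => <-.
by rewrite h /unemb big1 // => i _; rewrite linear0 row0 trmx0; case: ifP.
Qed.

Definition mxf m n (f : 'rV[F]_m -> 'rV[F]_n) : 'M[F]_(m, n) :=
  \matrix_(i, j) f (delta_mx 0 i) 0 j.

Lemma mxfE m n (f : 'rV[F]_m -> 'rV[F]_n) :
  (forall c u v, f (c *: u + v) = c *: f u + f v) -> forall u, u *m mxf f = f u.
Proof.
move=> hf u.
have f0 : f 0 = 0.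
  have h := hf 1 0 0; rewrite scale1r addr0 scale1r in h.
  by have := congr1 (fun x => x - f 0) h; rewrite subrr addrK => <-.
have fsum : forall (I : finType) (c : I -> F) (v : I -> 'rV_m), f (\sum_i c i *: v i) = \sum_i c i *: f (v i).
  move=> I c v; elim/big_rec2: _ => [|i x y _ <-]; first exact: f0.
  by rewrite hf.
rewrite [u in RHS]row_sum_delta fsum; apply/rowP => j; rewrite !mxE summxE.
by apply: eq_bigr => i _; rewrite !mxE.
Qed.


Lemma sum_mxvec (R : nmodType) m n (G : 'I_(m * n) -> R) :
  \sum_k G k = \sum_(i < m) \sum_(j < n) G (mxvec_index i j).
Proof.
rewrite (reindex (uncurry (@mxvec_index m n))) /=; last first.
  exact: curry_mxvec_bij.
by rewrite pair_big /=; apply: eq_bigr => -[i j].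
Qed.

Definition linD (g : dseq -> dseq) := forall c psi phi,
  g (fun j => c *: psi j + phi j) = (fun j => c *: g psi j + g phi j).

Lemma unemb_linf L0 n c (u v : 'rV[F]_(n * d)) :
  unemb L0 (c *: u + v) = (fun j => c *: unemb L0 u j + unemb L0 v j).
Proof. by apply: functional_extensionality => j; rewrite unemb_lin. Qed.

Lemma bbl_linD : linD bbl.
Proof. by move=> c psi phi; apply: functional_extensionality => j; rewrite bbl_add bbl_scale. Qed.

Lemma lin_window (g : dseq -> dseq) L0 n J0 m : linD g ->
  forall c (u v : 'rV[F]_(n * d)), emb J0 m (g (unemb L0 (c *: u + v))) =
     c *: emb J0 m (g (unemb L0 u)) + emb J0 m (g (unemb L0 v)).
Proof. by move=> hg c u v; rewrite unemb_linf hg emb_lin. Qed.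

Lemma unemb_delta L0 n (i : 'I_n) (al : 'I_d) j :
  unemb L0 (delta_mx 0 (mxvec_index i al)) j = if j == L0 + i%:Z then delta_mx al 0 else 0.
Proof.
case: ifP => [/eqP ->|hj].
  rewrite unemb_at vec_mx_delta; apply/matrixP => x y; rewrite !mxE (ord1 y) !eqxx /=.
  by rewrite andbT.
rewrite /unemb big1 // => i' _; case: ifP => // /eqP hi'.
rewrite vec_mx_delta; apply/matrixP => x y; rewrite !mxE.
have -> : (i' == i) = false; last by rewrite ?andbF.
by apply/negbTE; apply: contraFN hj => /eqP hii; rewrite -hi' hii.
Qed.

Section Rank.
Hypothesis hreg : regular a p q.

Definition eqf L0 n (u : 'rV[F]_(n * d)) : 'rV[F]_((n - t) * d) :=
  emb (L0 - pp p) (n - t) (bbl (unemb L0 u)).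
Arguments eqf : clear implicits.

Lemma eqf_lin L0 n : forall c u v, eqf L0 n (c *: u + v) = c *: eqf L0 n u + eqf L0 n v.
Proof. exact: lin_window bbl_linD. Qed.


Definition e0 := absz (p - pp p).

Lemma mx_delta_col (M : 'M[F]_d) (al be : 'I_d) : (M *m delta_mx al (0 : 'I_1)) be 0 = M be al.
Proof.
rewrite mxE (bigD1 al) //= big1 ?addr0; first by rewrite mxE !eqxx mulr1.
by move=> x hx; rewrite mxE (negbTE hx) mulr0.
Qed.

Lemma eqf_delta L0 n (i : 'I_n) (al : 'I_d) (s : 'I_(n - t)) (be : 'I_d) :
  eqf L0 n (delta_mx 0 (mxvec_index i al)) 0 (mxvec_index s be) =
  \sum_(r < (bw p q).+1) (if (s + e0 + r == i)%N then a (p + r%:Z) be al else 0).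
Proof.
rewrite /eqf /emb mxvecE mxE /Defs.bbl summxE; apply: eq_bigr => r _.
rewrite unemb_delta; have [h1 h2] := pp_le.
case: ifP => /eqP h; case: ifP => /eqP h'.
- by rewrite mx_delta_col.
- exfalso; apply: h'; move: h; rewrite /e0; lia.
- exfalso; apply: h; move: h'; rewrite /e0; lia.
- by rewrite mulmx0 mxE.
Qed.

Lemma eqT_inj L0 n (y : 'rV[F]_((n - t) * d)) : (t <= n)%N ->
  y *m (mxf (eqf L0 n))^T = 0 -> y = 0.
Proof.
move=> htn hy.
have hc : forall (i : 'I_n) (al : 'I_d), \sum_(s < n - t) \sum_(be < d)
    y 0 (mxvec_index s be) * (\sum_(r < (bw p q).+1) (if (s + e0 + r == i)%N then a (p + r%:Z) be al else 0)) = 0.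
  move=> i al; have := congr1 (fun M : 'rV_(n*d) => M 0 (mxvec_index i al)) hy.
  rewrite !mxE sum_mxvec => h; rewrite -[RHS]h.
  by apply: eq_bigr => s _; apply: eq_bigr => be _; rewrite !mxE eqf_delta.
pose Y : 'rV[{poly F}]_d := \row_be \sum_(s < n - t) y 0 (mxvec_index s be) *: 'X^s.
pose S := symb_poly a p q.
have hYS : Y *m S = 0.
  apply/rowP => al; rewrite [RHS]mxE.
  have hX : 'X^e0 * (Y *m S) 0 al = 0.
    have -> : 'X^e0 * (Y *m S) 0 al = \sum_(i < n) (\sum_(s < n - t) \sum_(be < d)
       y 0 (mxvec_index s be) * (\sum_(r < (bw p q).+1) (if (s + e0 + r == i)%N then a (p + r%:Z) be al else 0))) *: 'X^i.
      rewrite mxE mulr_sumr.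
      under eq_bigr do rewrite /Y /S !mxE mulr_suml mulr_sumr.
      rewrite exchange_big /=.
      under [RHS]eq_bigr do rewrite scaler_suml.
      rewrite [RHS]exchange_big /=. apply: eq_bigr => s _ /=.
      under [RHS]eq_bigr do rewrite scaler_suml.
      rewrite [RHS]exchange_big /=; apply: eq_bigr => be _.
      rewrite mulr_sumr mulr_sumr.
      under [RHS]eq_bigr do rewrite mulr_sumr scaler_suml.
      rewrite [RHS]exchange_big /=. apply: eq_bigr => r _.
      have hlt : (s + e0 + r < n)%N.
        have := ltn_ord s; have := ltn_ord r; have := t_eq; have [h1 h2] := pp_le; have [h3 h4] := qq_ge.
        rewrite /e0 /bw /t; move: htn; rewrite /t; lia.
      rewrite (bigD1 (Ordinal hlt)) //= eqxx big1 ?addr0; last first.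
        move=> i hi; rewrite ifF ?mulr0 ?scale0r //; apply/negbTE; apply: contra hi => /eqP hi.
        by apply/eqP/val_inj; rewrite /= hi.
      by rewrite -!mul_polyC polyCM !exprD; ring.
    rewrite big1 // => i _; by rewrite hc scale0r.
  move/eqP: hX; rewrite mulf_eq0 => /orP[|/eqP //].
  by rewrite expf_eq0 polyX_eq0 andbF.
have hdet : \det S != 0 := hreg.
have hY : Y = 0.
  have := congr1 (fun M => M *m \adj S) hYS; rewrite -mulmxA mul_mx_adj mul_mx_scalar mul0mx.
  move=> h; apply/rowP => be; have := congr1 (fun M : 'rV_d => M 0 be) h; rewrite !mxE.
  by move/eqP; rewrite mulf_eq0 (negbTE hdet) /= => /eqP.
apply/rowP => k; case/mxvec_indexP: k => s be.
have := congr1 (fun M : 'rV[{poly F}]_d => (M 0 be)`_s) hY; rewrite !mxE coef_sum coef0.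
rewrite (bigD1 s) //= big1 ?addr0; first by rewrite coefZ coefXn eqxx mulr1.
move=> s' hs'; rewrite coefZ coefXn.
have -> : (s == s' :> nat) = false by rewrite eq_sym; exact: negbTE hs'.
by rewrite mulr0.
Qed.

Lemma rank_eqf L0 n : (t <= n)%N -> \rank (mxf (eqf L0 n)) = ((n - t) * d)%N.
Proof.
move=> htn; rewrite -mxrank_tr.
have : row_free (mxf (eqf L0 n))^T.
  rewrite -kermx_eq0; apply/eqP/row_matrixP => i; rewrite row0.
  by apply: (@eqT_inj L0 n _ htn); rewrite -row_mul mulmx_ker row0.
by rewrite /row_free => /eqP.
Qed.

Definition Kmx L0 n := kermx (mxf (eqf L0 n)).

Lemma rank_Kmx L0 n : (t <= n)%N -> \rank (Kmx L0 n) = (t * d)%N.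
Proof.
move=> htn; rewrite /Kmx mxrank_ker rank_eqf // -mulnBl.
by congr (_ * _)%N; lia.
Qed.

Lemma fun0P (psi : dseq) : psi = (fun _ => 0) <-> forall j, psi j = 0.
Proof.
split; first by move=> -> j.
by move=> h; apply: functional_extensionality.
Qed.

Lemma Mfin_char L0 R0 psi : Mfin a p q L0 R0 psi <->
  (forall j, ~~ ((L0 <= j) && (j <= R0)) -> psi j = 0) /\
  (forall j, L0 - pp p <= j -> j <= R0 - qq q -> bbl psi j = 0).
Proof.
rewrite /Mfin /Pfin fun0P; split.
  move=> [h1 h2]; split.
    by move=> j hj; rewrite -h1 (negbTE hj).
  by move=> j hj1 hj2; have := h2 j; rewrite hj1 hj2.
move=> [h1 h2]; split.
  apply: functional_extensionality => j; case: ifP => // /negbT /h1 ->; by [].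
by move=> j; case: ifP => // /andP[hj1 hj2]; rewrite h2.
Qed.

Lemma iterPge L0 (psi : dseq) (kk : nat) :
  iter kk.+1 (fun f => Pge L0 (shiftL f)) psi = fun j => if L0 <= j then psi (j + kk.+1%:Z) else 0.
Proof.
apply: functional_extensionality; elim: kk => [|kk IH] j.
  by rewrite /= /Pge /shiftL.
rewrite iterS {1}/Pge /shiftL IH.
case: ifP => // h; rewrite ifT; last by lia.
by congr psi; lia.
Qed.

Lemma iterPle R0 (psi : dseq) (kk : nat) :
  iter kk.+1 (fun f => Ple R0 (shiftR f)) psi = fun j => if j <= R0 then psi (j - kk.+1%:Z) else 0.
Proof.
apply: functional_extensionality; elim: kk => [|kk IH] j.
  by rewrite /= /Ple /shiftR.
rewrite iterS {1}/Ple /shiftR IH.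
case: ifP => // h; rewrite ifT; last by lia.
by congr psi; lia.
Qed.

Lemma FLm_char L0 psi : FLminus a p q L0 psi <->
  [/\ (forall j, j < L0 -> psi j = 0),
      (forall j, L0 - pp p <= j -> bbl psi j = 0) &
      exists kk : nat, forall j, L0 + kk%:Z <= j -> psi j = 0].
Proof.
rewrite /FLminus /Mge /Pge fun0P; split.
  move=> [[h1 h2] [kk [hk0 hk]]]; split.
  - by move=> j hj; rewrite -h1 ifF //; lia.
  - by move=> j hj; have := h2 j; rewrite hj.
  - exists kk => j hj; move: hk; case: kk hk0 hj => // kk _ hj.
    rewrite iterPge fun0P => /(_ (j - kk.+1%:Z)); rewrite ifT; last by lia.
    by have -> : j - kk.+1%:Z + kk.+1%:Z = j by ring.
move=> [h1 h2 [kk hk]]; split; first split.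
- by apply: functional_extensionality => j; case: ifP => // /negbT h; rewrite h1 //; lia.
- by move=> j; case: ifP => // /h2.
exists kk.+1; split => //; rewrite iterPge fun0P => j; case: ifP => // hj; apply: hk; lia.
Qed.

Lemma FRp_char R0 psi : FRplus a p q R0 psi <->
  [/\ (forall j, R0 < j -> psi j = 0),
      (forall j, j <= R0 - qq q -> bbl psi j = 0) &
      exists kk : nat, forall j, j <= R0 - kk%:Z -> psi j = 0].
Proof.
rewrite /FRplus /Mle /Ple fun0P; split.
  move=> [[h1 h2] [kk [hk0 hk]]]; split.
  - by move=> j hj; rewrite -h1 ifF //; lia.
  - by move=> j hj; have := h2 j; rewrite hj.
  - exists kk => j hj; move: hk; case: kk hk0 hj => // kk _ hj.
    rewrite iterPle fun0P => /(_ (j + kk.+1%:Z)); rewrite ifT; last by lia.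
    by have -> : j + kk.+1%:Z - kk.+1%:Z = j by ring.
move=> [h1 h2 [kk hk]]; split; first split.
- by apply: functional_extensionality => j; case: ifP => // /negbT h; rewrite h1 //; lia.
- by move=> j; case: ifP => // /h2.
exists kk.+1; split => //; rewrite iterPle fun0P => j; case: ifP => // hj; apply: hk; lia.
Qed.


Definition EK L0 n J0 m := kermx (mxf (fun u : 'rV[F]_(n * d) => emb J0 m (bbl (unemb L0 u)))).

Lemma emb0P L0 n psi : emb L0 n psi = 0 <-> forall j, L0 <= j -> j < L0 + n%:Z -> psi j = 0.
Proof.
split; first exact: emb_eq0.
by move=> h; rewrite -(emb0 L0 n); apply: emb_ext => j h1 h2; rewrite h.
Qed.

Lemma EK_mem L0 n J0 m (v : 'rV[F]_(n * d)) : (v <= EK L0 n J0 m)%MS <->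
  forall j, J0 <= j -> j < J0 + m%:Z -> bbl (unemb L0 v) j = 0.
Proof.
rewrite /EK sub_kermx mxfE; last exact: lin_window bbl_linD.
by rewrite -emb0P; split => [/eqP|->].
Qed.

Lemma unemb_supp L0 n (v : 'rV[F]_(n * d)) j : ~~ ((L0 <= j) && (j <= L0 + n%:Z - 1)) -> unemb L0 v j = 0.
Proof. by move=> h; apply: unemb_out; apply: contra h => /andP[h1 h2]; apply/andP; split => //; lia. Qed.

Lemma unemb_emb_supp L0 n psi : (forall j, ~~ ((L0 <= j) && (j <= L0 + n%:Z - 1)) -> psi j = 0) ->
  unemb L0 (emb L0 n psi) = psi.
Proof.
move=> h; apply: functional_extensionality => j; rewrite unemb_emb.
case: ifP => // /negbT hj; rewrite h //; apply: contra hj => /andP[h1 h2]; apply/andP; split => //; lia.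
Qed.

Lemma Kmx_mem L0 n (v : 'rV[F]_(n * d)) : (t <= n)%N ->
  (v <= Kmx L0 n)%MS <-> Mfin a p q L0 (L0 + n%:Z - 1) (unemb L0 v).
Proof.
move=> htn; rewrite (@EK_mem L0 n (L0 - pp p) (n - t) v) Mfin_char.
have ht := t_eq; split.
  move=> h; split; first exact: unemb_supp.
  move=> j h1 h2; apply: h => //; lia.
move=> [_ h] j h1 h2; apply: h => //; move: htn; rewrite /t; lia.
Qed.

Lemma rank_free m n (G : 'M[F]_(m, n)) : (forall y : 'rV_m, y *m G = 0 -> y = 0) -> \rank G = m.
Proof.
move=> h; have : row_free G.
  rewrite -kermx_eq0; apply/eqP/row_matrixP => i; rewrite row0.
  by apply: h; rewrite -row_mul mulmx_ker row0.
by rewrite /row_free => /eqP.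
Qed.

Lemma fam_bound L0 n m (g : 'I_m -> dseq) : (t <= n)%N ->
  (forall l, Mfin a p q L0 (L0 + n%:Z - 1) (g l)) ->
  (forall c : 'I_m -> F, (forall j, \sum_l c l *: g l j = 0) -> forall l, c l = 0) ->
  (m <= t * d)%N.
Proof.
move=> htn hg hind.
pose G : 'M[F]_(m, n * d) := \matrix_l emb L0 n (g l).
have hsupp : forall l j, ~~ ((L0 <= j) && (j <= L0 + n%:Z - 1)) -> g l j = 0.
  by move=> l; have /Mfin_char [] := hg l.
have hGK : (G <= Kmx L0 n)%MS.
  apply/row_subP => l; rewrite rowK Kmx_mem // unemb_emb_supp //; exact: hsupp.
have hr : \rank G = m.
  apply: rank_free => y hy; apply/rowP => l; rewrite mxE.
  apply: hind l => j.
  move: hy; rewrite mulmx_sum_row.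
  under eq_bigr do rewrite rowK.
  rewrite -emb_sum => /emb0P hz.
  case hj : ((L0 <= j) && (j <= L0 + n%:Z - 1)).
    by move/andP: hj => [h1 h2]; apply: hz => //; lia.
  by rewrite big1 // => l' _; rewrite hsupp ?hj // scaler0.
by rewrite -hr -(rank_Kmx L0 htn); apply: mxrankS.
Qed.


Lemma fam_bound2 L0 n m1 m2 (g1 : 'I_m1 -> dseq) (g2 : 'I_m2 -> dseq) : (t <= n)%N ->
  (forall l, Mfin a p q L0 (L0 + n%:Z - 1) (g1 l)) ->
  (forall l, Mfin a p q L0 (L0 + n%:Z - 1) (g2 l)) ->
  (forall (c1 : 'I_m1 -> F) (c2 : 'I_m2 -> F),
     (forall j, \sum_l c1 l *: g1 l j + \sum_l c2 l *: g2 l j = 0) ->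
     (forall l, c1 l = 0) /\ (forall l, c2 l = 0)) ->
  (m1 + m2 <= t * d)%N.
Proof.
move=> htn h1 h2 hind.
pose g (l : 'I_(m1 + m2)) := match split l with inl i => g1 i | inr r => g2 r end.
apply: (@fam_bound L0 n _ g htn).
  by move=> l; rewrite /g; case: (split l).
move=> c hc.
have hpre : forall j, \sum_l c (lshift m2 l) *: g1 l j + \sum_l c (rshift m1 l) *: g2 l j = 0.
  move=> j; have := hc j; rewrite big_split_ord /=.
  have sl : forall i : 'I_m1, split (lshift m2 i) = inl i by move=> i; exact: (@unsplitK m1 m2 (inl i)).
  have sr : forall i : 'I_m2, split (rshift m1 i) = inr i by move=> i; exact: (@unsplitK m1 m2 (inr i)).
  by rewrite /g; under eq_bigr do rewrite sl; under [X in _ + X = _]eq_bigr do rewrite sr.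
have [hc1 hc2] := hind _ _ hpre.
move=> l; rewrite -(splitK l); case: (split l) => [i|r] /=; [exact: hc1|exact: hc2].
Qed.

Section WithK.
Variable k : nat.
Hypothesis hk : has_dim (kerA a p q) k.

Definition sigma := (t * d - k)%N.


Lemma k_le : (k <= t * d)%N.
Proof.
case: hk => b [hb [hind hspan]].
have := @fam_bound2 0 t 0 k (fun i => match i with Ordinal _ _ => fun _ => 0 end) (fun r => Pfin 0 (t%:Z - 1) (b r)) (leqnn t).
rewrite add0n; apply.
- by move=> [].
- move=> r; apply/Mfin_char; split.
    by move=> j hj; rewrite /Pfin; rewrite add0r in hj; rewrite (negbTE hj).
  move=> j h1 h2; rewrite -(hb r j); apply: bbl_local => i hi1 hi2.
  have [? ?] := pp_le; have [? ?] := qq_ge; have := t_eq => ?.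
  rewrite /Pfin; case: ifP => // /negP []; apply/andP; split; lia.
move=> c1 c2 hc; split; first by move=> [].
apply: hind; apply: (@ker_win0 k hk _ 0).
  by move=> j; rewrite bbl_sum big1 // => r _; rewrite hb scaler0.
move=> i hi1 hi2; have := hc i; rewrite big_ord0 add0r => h; rewrite -[RHS]h; apply: eq_bigr => r _.
rewrite /Pfin; case: ifP => // /negP []; apply/andP; split; lia.
Qed.


Lemma Pfin_ker_Mfin L0 R0 phi : kerA a p q phi -> Mfin a p q L0 R0 (Pfin L0 R0 phi).
Proof.
move=> hphi; apply/Mfin_char; split.
  by move=> j hj; rewrite /Pfin (negbTE hj).
move=> j h1 h2; rewrite -(hphi j); apply: bbl_local => i hi1 hi2.
have [? ?] := pp_le; have [? ?] := qq_ge.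
rewrite /Pfin; case: ifP => // /negP []; apply/andP; split; lia.
Qed.

Lemma Fm_supp L0 psi : FLminus a p q L0 psi -> forall j, L0 + sigma%:Z <= j -> psi j = 0.
Proof.
move=> /FLm_char [hs heq [kk hkk]] j hj.
apply/eqP; apply: contraT => hnz.
have ex : exists n : nat, psi (L0 + n%:Z) != 0.
  by exists (absz (j - L0)%R); have -> : L0 + (absz (j - L0)%R)%:Z = j by lia.
have ub : forall n : nat, psi (L0 + n%:Z) != 0 -> (n <= kk)%N.
  move=> n hn; case: (leqP n kk) => // hlt; move: hn; rewrite hkk ?eqxx //; lia.
case: (ex_maxnP ex ub) => n1 hn1 hmax.
have hz : forall i, L0 + n1%:Z < i -> psi i = 0.
  move=> i hi; apply/eqP; apply: contraT => hne.
  have := hmax (absz (i - L0)%R); have -> : L0 + (absz (i - L0)%R)%:Z = i by lia.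
  move=> /(_ hne); lia.
have hn1s : (sigma <= n1)%N.
  have := hmax (absz (j - L0)%R); have -> : L0 + (absz (j - L0)%R)%:Z = j by lia.
  move=> /(_ hnz); lia.
case: hk => b [hb [hind hspan]].
pose n := (n1.+1 + t)%N.
pose gs (i : 'I_n1.+1) : dseq := fun j => if L0 <= j then psi (j + i%:Z) else 0.
pose gb (r : 'I_k) := Pfin L0 (L0 + n%:Z - 1) (b r).
have [h1 h2] := pp_le; have [h3 h4] := qq_ge; have ht := t_eq.
have hkl := k_le.
suff hb2 : (n1.+1 + k <= t * d)%N by move: hn1s hb2 hkl; rewrite /sigma; lia.
apply: (@fam_bound2 L0 n n1.+1 k gs gb (leq_addl _ _)).
- move=> i; apply/Mfin_char; split.
    move=> x hx; rewrite /gs; case: ifP => // hx1; apply: hz.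
    have := ltn_ord i; move: hx; rewrite hx1 /= /n; lia.
  move=> x hx1 hx2; rewrite (@bbl_local _ (sh i%:Z psi)); first by rewrite bbl_sh heq //; lia.
  by move=> y hy1 hy2; rewrite /gs /sh ifT //; lia.
- by move=> r; apply: Pfin_ker_Mfin.
move=> c1 c2 hc.
have hc2 : forall r, c2 r = 0.
  apply: hind; apply: (@ker_win0 k hk _ (L0 + n1.+1%:Z)).
    by move=> x; rewrite bbl_sum big1 // => r _; rewrite hb scaler0.
  move=> x hx1 hx2; have := hc x; rewrite big1 ?add0r; last first.
    by move=> i _; rewrite /gs ifT; [rewrite hz ?scaler0 //|]; lia.
  move=> h; rewrite -[RHS]h; apply: eq_bigr => r _; rewrite /gb /Pfin.
  case: ifP => // /negP []; apply/andP; split; move: hx2; rewrite /n; lia.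
split => //.
have hc1 : forall x, \sum_i c1 i *: gs i x = 0.
  move=> x; have := hc x; rewrite [X in _ + X]big1 ?addr0 // => r _; by rewrite hc2 scale0r.
move=> i; apply/eqP; apply: contraT => hi.
case: (@arg_minnP _ i (fun l => c1 l != 0) (fun l : 'I_n1.+1 => l : nat) hi) => i0 hi0 hmin.
have := hc1 (L0 + n1%:Z - i0%:Z); rewrite (bigD1 i0) //= big1 ?addr0.
  rewrite /gs ifT; last by have := ltn_ord i0; lia.
  have -> : L0 + n1%:Z - i0%:Z + i0%:Z = L0 + n1%:Z by ring.
  by move/eqP; rewrite scaler_eq0 (negbTE hi0) (negbTE hn1).
move=> i' hi'; have [->|ci'] := eqVneq (c1 i') 0; first by rewrite scale0r.
have hle := hmin i' ci'; have hne : (i' : nat) != i0 by [].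
rewrite /gs; case: ifP => _; last by rewrite scaler0.
rewrite hz ?scaler0 //; lia.
Qed.


Lemma Fp_supp R0 psi : FRplus a p q R0 psi -> forall j, j <= R0 - sigma%:Z -> psi j = 0.
Proof.
move=> /FRp_char [hs heq [kk hkk]] j hj.
apply/eqP; apply: contraT => hnz.
have ex : exists n : nat, psi (R0 - n%:Z) != 0.
  by exists (absz (R0 - j)%R); have -> : R0 - (absz (R0 - j)%R)%:Z = j by lia.
have ub : forall n : nat, psi (R0 - n%:Z) != 0 -> (n <= kk)%N.
  move=> n hn; case: (leqP n kk) => // hlt; move: hn; rewrite hkk ?eqxx //; lia.
case: (ex_maxnP ex ub) => n1 hn1 hmax.
have hz : forall i, i < R0 - n1%:Z -> psi i = 0.
  move=> i hi; apply/eqP; apply: contraT => hne.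
  have := hmax (absz (R0 - i)%R); have -> : R0 - (absz (R0 - i)%R)%:Z = i by lia.
  move=> /(_ hne); lia.
have hn1s : (sigma <= n1)%N.
  have := hmax (absz (R0 - j)%R); have -> : R0 - (absz (R0 - j)%R)%:Z = j by lia.
  move=> /(_ hnz); lia.
case: hk => b [hb [hind hspan]].
pose n := (n1.+1 + t)%N.
pose L0 := R0 - n%:Z + 1.
have hL0 : L0 + n%:Z - 1 = R0 by rewrite /L0; ring.
pose gs (i : 'I_n1.+1) : dseq := fun j => if j <= R0 then psi (j - i%:Z) else 0.
pose gb (r : 'I_k) := Pfin L0 (L0 + n%:Z - 1) (b r).
have [h1 h2] := pp_le; have [h3 h4] := qq_ge; have ht := t_eq.
have hkl := k_le.
suff hb2 : (n1.+1 + k <= t * d)%N by move: hn1s hb2 hkl; rewrite /sigma; lia.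
apply: (@fam_bound2 L0 n n1.+1 k gs gb (leq_addl _ _)).
- move=> i; rewrite hL0; apply/Mfin_char; split.
    move=> x hx; rewrite /gs; case: ifP => // hx1; apply: hz.
    have := ltn_ord i; move: hx; rewrite hx1 andbT /L0 /n; lia.
  move=> x hx1 hx2; rewrite (@bbl_local _ (sh (- i%:Z) psi)); first by rewrite bbl_sh heq //; lia.
  by move=> y hy1 hy2; rewrite /gs /sh ifT //; lia.
- by move=> r; apply: Pfin_ker_Mfin.
move=> c1 c2 hc.
have hc2 : forall r, c2 r = 0.
  apply: hind; apply: (@ker_win0 k hk _ L0).
    by move=> x; rewrite bbl_sum big1 // => r _; rewrite hb scaler0.
  move=> x hx1 hx2; have := hc x; rewrite big1 ?add0r; last first.
    move=> i _; rewrite /gs; case: ifP => _; last by rewrite scaler0.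
    by rewrite hz ?scaler0 //; move: hx2; rewrite /L0 /n; lia.
  move=> h; rewrite -[RHS]h; apply: eq_bigr => r _; rewrite /gb /Pfin.
  case: ifP => // /negP []; apply/andP; split; move: hx2; rewrite /L0 /n; lia.
split => //.
have hc1 : forall x, \sum_i c1 i *: gs i x = 0.
  move=> x; have := hc x; rewrite [X in _ + X]big1 ?addr0 // => r _; by rewrite hc2 scale0r.
move=> i; apply/eqP; apply: contraT => hi.
case: (@arg_minnP _ i (fun l => c1 l != 0) (fun l : 'I_n1.+1 => l : nat) hi) => i0 hi0 hmin.
have := hc1 (R0 - n1%:Z + i0%:Z); rewrite (bigD1 i0) //= big1 ?addr0.
  rewrite /gs ifT; last by have := ltn_ord i0; lia.
  have -> : R0 - n1%:Z + i0%:Z - i0%:Z = R0 - n1%:Z by ring.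
  by move/eqP; rewrite scaler_eq0 (negbTE hi0) (negbTE hn1).
move=> i' hi'; have [->|ci'] := eqVneq (c1 i') 0; first by rewrite scale0r.
have hle := hmin i' ci'; have hne : (i' : nat) != i0 by [].
rewrite /gs; case: ifP => _; last by rewrite scaler0.
rewrite hz ?scaler0 //; lia.
Qed.

Section Window.
Variables L R : int.
Hypothesis hLR : L <= R.
Let N := absz (R - L + 1).
Hypothesis hN : (sigma.*2 + t <= N)%N.

Lemma hRN : R = L + N%:Z - 1.
Proof. rewrite /N; lia. Qed.

Lemma Fm_Mfin psi : FLminus a p q L psi -> Mfin a p q L R psi.
Proof.
move=> hF; have hs := Fm_supp hF; move/FLm_char: hF => [h1 h2 _].
apply/Mfin_char; split; last by move=> j hj _; exact: h2.
move=> j; rewrite negb_and -!ltNge => /orP[/h1 //|hj]; apply: hs.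
move: hN; rewrite /N; lia.
Qed.

Lemma Fp_Mfin psi : FRplus a p q R psi -> Mfin a p q L R psi.
Proof.
move=> hF; have hs := Fp_supp hF; move/FRp_char: hF => [h1 h2 _].
apply/Mfin_char; split; last by move=> j _ hj; exact: h2.
move=> j; rewrite negb_and -!ltNge => /orP[hj|/h1 //]; apply: hs.
move: hN; rewrite /N; lia.
Qed.

Lemma indep3 u v w : PkerA a p q L R u -> FLminus a p q L v -> FRplus a p q R w ->
  (forall j, u j + v j + w j = 0) ->
  [/\ forall j, u j = 0, forall j, v j = 0 & forall j, w j = 0].
Proof.
move=> [phi [hphi ->]] hv hw h.
have hvs := Fm_supp hv; have hws := Fp_supp hw.
move/FLm_char: hv => [hv1 _ _]; move/FRp_char: hw => [hw1 _ _].
have hphi0 : forall j, phi j = 0.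
  apply: (@ker_win0 k hk _ (L + sigma%:Z)) => // j hj1 hj2.
  have := h j; rewrite hvs // hws; last by move: hN; rewrite /N; lia.
  rewrite !addr0 /Pfin ifT //; apply/andP; split; move: hN; rewrite /N; lia.
have hu : forall j, Pfin L R phi j = 0 by move=> j; rewrite /Pfin hphi0; case: ifP.
split => // j.
  case: (ltrP j (L + sigma%:Z)) => hj; last exact: hvs.
  have := h j; rewrite hu add0r hws ?addr0 //; move: hN; rewrite /N; lia.
case: (lerP j (R - sigma%:Z)) => hj; first exact: hws.
have := h j; rewrite hu add0r hvs ?add0r //; move: hN; rewrite /N; lia.
Qed.

Definition FmM := EK L N (L - pp p) N.
Definition FpM := EK L N (L - qq q) N.

Lemma FmM_mem (v : 'rV[F]_(N * d)) : (v <= FmM)%MS -> FLminus a p q L (unemb L v).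
Proof.
move=> /EK_mem hv; apply/FLm_char; have [h1 h2] := pp_le; have [h3 h4] := qq_ge.
split.
- by move=> j hj; apply: unemb_out; apply/negP => /andP[]; lia.
- move=> j hj; case: (ltrP j (L - pp p + N%:Z)) => hj2; first exact: hv.
  rewrite -(bbl0 j); apply: bbl_local => i hi1 hi2; apply: unemb_out; apply/negP => /andP[]; lia.
- by exists N => j hj; apply: unemb_out; apply/negP => /andP[]; lia.
Qed.

Lemma FmM_in psi : FLminus a p q L psi -> (emb L N psi <= FmM)%MS /\ unemb L (emb L N psi) = psi.
Proof.
move=> hF; have hM := Fm_Mfin hF; move/FLm_char: hF => [h1 h2 _].
have hu : unemb L (emb L N psi) = psi.
  apply: unemb_emb_supp => j hj; move/Mfin_char: hM => [hs _]; apply: hs; by rewrite hRN.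
split => //; apply/EK_mem; rewrite hu => j hj _; exact: h2.
Qed.

Lemma FpM_mem (v : 'rV[F]_(N * d)) : (v <= FpM)%MS -> FRplus a p q R (unemb L v).
Proof.
move=> /EK_mem hv; apply/FRp_char; have [h1 h2] := pp_le; have [h3 h4] := qq_ge.
have hR := hRN.
split.
- by move=> j hj; apply: unemb_out; apply/negP => /andP[]; lia.
- move=> j hj; case: (lerP (L - qq q) j) => hj2; first by apply: hv => //; lia.
  rewrite -(bbl0 j); apply: bbl_local => i hi1 hi2; apply: unemb_out; apply/negP => /andP[]; lia.
- by exists (absz (R - L + 1)%R) => j hj; apply: unemb_out; apply/negP => /andP[]; lia.
Qed.

Lemma FpM_in psi : FRplus a p q R psi -> (emb L N psi <= FpM)%MS /\ unemb L (emb L N psi) = psi.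
Proof.
move=> hF; have hM := Fp_Mfin hF; move/FRp_char: hF => [h1 h2 _].
have hu : unemb L (emb L N psi) = psi.
  apply: unemb_emb_supp => j hj; move/Mfin_char: hM => [hs _]; apply: hs; by rewrite hRN.
split => //; apply/EK_mem; rewrite hu => j _ hj; apply: h2; have := hRN; lia.
Qed.

Variable b : 'I_k -> dseq.
Hypothesis hb : forall r, kerA a p q (b r).
Hypothesis hspan : forall psi, kerA a p q psi -> exists c : 'I_k -> F, forall j, psi j = \sum_(i < k) c i *: b i j.

Definition Umx : 'M[F]_(k, N * d) := \matrix_r emb L N (b r).

Lemma Umx_mem (v : 'rV[F]_(N * d)) : (v <= Umx)%MS -> PkerA a p q L R (unemb L v).
Proof.
move=> /submxP [D ->]; exists (fun j => \sum_r D 0 r *: b r j); split.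
  by move=> j; rewrite bbl_sum big1 // => r _; rewrite hb scaler0.
rewrite mulmx_sum_row; under eq_bigr do rewrite rowK.
rewrite -emb_sum; apply: functional_extensionality => j; rewrite unemb_emb /Pfin hRN.
by congr (if _ then _ else _); apply/idP/idP => /andP[h1 h2]; apply/andP; split; lia.
Qed.

Lemma Umx_in u : PkerA a p q L R u -> (emb L N u <= Umx)%MS /\ unemb L (emb L N u) = u.
Proof.
move=> [phi [hphi ->]]; split; last first.
  apply: unemb_emb_supp => j hj; rewrite /Pfin; rewrite -hRN in hj; by rewrite (negbTE hj).
have [c hc] := hspan hphi.
have -> : emb L N (Pfin L R phi) = emb L N (fun j => \sum_r c r *: b r j).
  apply: emb_ext => j h1 h2; rewrite /Pfin -hc ifT //; apply/andP; split; have := hRN; lia.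
rewrite emb_sum.
have -> : \sum_r c r *: emb L N (b r) = (\row_r c r) *m Umx.
  by rewrite mulmx_sum_row; apply: eq_bigr => r _; rewrite rowK mxE.
exact: submxMl.
Qed.

Definition WL (j : nat) := L - j%:Z.
Definition WR (j : nat) := R + j%:Z.
Definition Wn (j : nat) := (j.*2 + N)%N.

Lemma Wn_end j : WL j + (Wn j)%:Z - 1 = WR j.
Proof. rewrite /WL /WR /Wn /N; lia. Qed.

Lemma Wn_t j : (t <= Wn j)%N.
Proof. move: hN; rewrite /Wn; lia. Qed.

Definition Ip (j m : nat) (psi : dseq) :=
  exists z, Mfin a p q (WL (j + m)) (WR (j + m)) z /\ psi = Pfin (WL j) (WR j) z.

Definition Res L1 n1 L2 n2 := mxf (fun u : 'rV[F]_(n1 * d) => emb L2 n2 (unemb L1 u)).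

Lemma ResE L1 n1 L2 n2 (u : 'rV[F]_(n1 * d)) : u *m Res L1 n1 L2 n2 = emb L2 n2 (unemb L1 u).
Proof. by rewrite mxfE // => c x y; apply: (@lin_window id) => c' psi phi. Qed.

Definition Imx j m := Kmx (WL (j + m)) (Wn (j + m)) *m Res (WL (j + m)) (Wn (j + m)) (WL j) (Wn j).

Lemma Pfin_Pfin L1 R1 L2 R2 (z : dseq) : L1 <= L2 -> R2 <= R1 -> Pfin L2 R2 (Pfin L1 R1 z) = Pfin L2 R2 z.
Proof.
move=> h1 h2; apply: functional_extensionality => j; rewrite /Pfin.
case: ifP => // /andP[h3 h4]; rewrite ifT //; apply/andP; split; lia.
Qed.

Lemma Mfin_restr L1 R1 L2 R2 (z : dseq) : Mfin a p q L1 R1 z -> L1 <= L2 -> R2 <= R1 ->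
  Mfin a p q L2 R2 (Pfin L2 R2 z).
Proof.
move=> /Mfin_char [hs he] h1 h2; apply/Mfin_char; split.
  by move=> j hj; rewrite /Pfin (negbTE hj).
move=> j hj1 hj2; rewrite -(he j); [|lia|lia].
apply: bbl_local => i hi1 hi2; have [? ?] := pp_le; have [? ?] := qq_ge.
rewrite /Pfin ifT //; apply/andP; split; lia.
Qed.

Lemma Imx_mem j m (v : 'rV[F]_(Wn j * d)) : (v <= Imx j m)%MS <-> Ip j m (unemb (WL j) v).
Proof.
split.
  move=> /submxP [D ->]; rewrite mulmxA ResE.
  have hw : (D *m Kmx (WL (j + m)) (Wn (j + m)) <= Kmx (WL (j + m)) (Wn (j + m)))%MS by exact: submxMl.
  move/(Kmx_mem _ _ (Wn_t _)): hw; rewrite Wn_end => hw.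
  exists (unemb (WL (j + m)) (D *m Kmx (WL (j + m)) (Wn (j + m)))); split => //.
  apply: functional_extensionality => x; rewrite unemb_emb /Pfin -(Wn_end j).
  by congr (if _ then _ else _); apply/idP/idP => /andP[h1 h2]; apply/andP; split; lia.
move=> [z [hz hv]].
pose w := emb (WL (j + m)) (Wn (j + m)) z.
have hwz : unemb (WL (j + m)) w = z.
  apply: unemb_emb_supp => x hx; move/Mfin_char: hz => [hs _]; apply: hs; by rewrite -Wn_end.
have hwK : (w <= Kmx (WL (j + m)) (Wn (j + m)))%MS.
  by apply/(Kmx_mem _ _ (Wn_t _)); rewrite hwz Wn_end.
have -> : v = w *m Res (WL (j + m)) (Wn (j + m)) (WL j) (Wn j).
  rewrite ResE hwz -[LHS](@emb_unemb (WL j) (Wn j)) hv; apply: emb_ext => x h1 h2.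
  rewrite /Pfin ifT //; apply/andP; split => //; have := Wn_end j; lia.
exact: submxMr.
Qed.

Lemma Ip_mono j m m' psi : (m <= m')%N -> Ip j m' psi -> Ip j m psi.
Proof.
move=> hmm [z [hz ->]]; exists (Pfin (WL (j + m)) (WR (j + m)) z); split.
  apply: Mfin_restr hz _ _; rewrite /WL /WR; lia.
rewrite Pfin_Pfin //; rewrite /WL /WR; lia.
Qed.

Lemma Ip_supp j m psi : Ip j m psi -> unemb (WL j) (emb (WL j) (Wn j) psi) = psi.
Proof.
move=> [z [hz ->]]; apply: unemb_emb_supp => x hx; rewrite /Pfin -Wn_end.
by rewrite (negbTE hx).
Qed.

Lemma nat_min (f : nat -> nat) : exists m0, forall m, (f m0 <= f m)%N.
Proof.
suff : forall B m, (f m <= B)%N -> exists m0, forall m', (f m0 <= f m')%N by move=> h; apply: (h (f 0%N) 0%N).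
elim=> [|B IH] m hm.
  by exists m => m'; move: hm; rewrite leqn0 => /eqP ->.
case: (classic (forall m', (f m <= f m')%N)) => [h|/not_all_ex_not [m' hm']]; first by exists m.
by apply: (IH m'); move/negP: hm'; rewrite -ltnNge; lia.
Qed.

Definition mj (j : nat) : nat :=
  proj1_sig (constructive_indefinite_description _ (nat_min (fun m => \rank (Imx j m)))).

Lemma mjP j m : (\rank (Imx j (mj j)) <= \rank (Imx j m))%N.
Proof. rewrite /mj; case: constructive_indefinite_description => m0 h /=; exact: h. Qed.

Lemma Ip_stab j m psi : (mj j <= m)%N -> Ip j (mj j) psi -> Ip j m psi.
Proof.
move=> hm hpsi.
have hsub : (Imx j m <= Imx j (mj j))%MS.
  apply/row_subP => i; apply/Imx_mem; apply: (Ip_mono hm); apply/Imx_mem; exact: row_sub.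
have [_ heq] := mxrank_leqif_eq hsub.
have /andP [_ hsub'] : (Imx j m == Imx j (mj j))%MS by rewrite -heq eqn_leq mxrankS // mjP.
have hs := Ip_supp hpsi.
have hv : (emb (WL j) (Wn j) psi <= Imx j (mj j))%MS by apply/Imx_mem; rewrite hs.
by have := submx_trans hv hsub'; move/Imx_mem; rewrite hs.
Qed.

Definition Q j := Ip j (mj j).

Lemma Ip_Mfin j m psi : Ip j m psi -> Mfin a p q (WL j) (WR j) psi.
Proof. move=> [z [hz ->]]; apply: Mfin_restr hz _ _; rewrite /WL /WR; lia. Qed.

Lemma Q_step j x : Q j x -> exists y, Q j.+1 y /\ Pfin (WL j) (WR j) y = x.
Proof.
move=> hx.
have hle : (mj j <= (mj j + mj j.+1).+1)%N by lia.
have [z [hz hxz]] := Ip_stab hle hx.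
exists (Pfin (WL j.+1) (WR j.+1) z); split; last first.
  by rewrite Pfin_Pfin // /WL /WR; lia.
apply: (@Ip_mono _ (mj j.+1) (mj j + mj j.+1)); first exact: leq_addl.
exists z; split => //; by move: hz; rewrite addnS -addSn.
Qed.

Lemma em_inf (P : Prop) : {P} + {~ P}.
Proof.
have : exists b : bool, if b then P else ~ P.
  by case: (classic P) => h; [exists true | exists false].
move/constructive_indefinite_description => [[] h]; [left|right]; exact: h.
Qed.

Definition next (j : nat) (y : dseq) : dseq :=
  match em_inf (exists y', Q j.+1 y' /\ Pfin (WL j) (WR j) y' = y) with
  | left h => proj1_sig (constructive_indefinite_description _ h)
  | right _ => y
  end.

Lemma nextP j y : Q j y -> Q j.+1 (next j y) /\ Pfin (WL j) (WR j) (next j y) = y.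
Proof.
move=> hy; rewrite /next; case: em_inf => [h|h]; last by exfalso; apply: h; exact: Q_step.
by case: constructive_indefinite_description.
Qed.

Lemma Q0_ker x : Q 0 x -> PkerA a p q L R x.
Proof.
move=> hx.
pose sq := fix sq (j : nat) : dseq := match j with 0 => x | j'.+1 => next j' (sq j') end.
have hQ : forall j, Q j (sq j).
  by elim=> [|j IH] //=; have [] := nextP IH.
have hself : forall j, Pfin (WL j) (WR j) (sq j) = sq j.
  by move=> j; have [z [_ hz]] := hQ j; rewrite {1}hz Pfin_Pfin // -hz.
have hcons : forall j n, Pfin (WL j) (WR j) (sq (n + j)%N) = sq j.
  move=> j; elim=> [|n IH]; first exact: hself.
  rewrite addSn /=.
  have [_ hn] := nextP (hQ (n + j)%N).
  transitivity (Pfin (WL j) (WR j) (Pfin (WL (n + j)%N) (WR (n + j)%N) (next (n + j)%N (sq (n + j)%N)))).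
    by rewrite Pfin_Pfin // /WL /WR; lia.
  by rewrite hn IH.
have hagree : forall j j' i, WL j <= i -> i <= WR j -> WL j' <= i -> i <= WR j' -> sq j i = sq j' i.
  move=> j j' i h1 h2 h3 h4.
  wlog hjj : j j' h1 h2 h3 h4 / (j <= j')%N.
    move=> H; case: (leqP j j') => hh; first exact: H.
    by symmetry; apply: H => //; exact: ltnW.
  have := hcons j (j' - j)%N; rewrite subnK // => <-.
  by rewrite /Pfin ifT //; apply/andP.
pose J (i : int) := (absz (i - L)%R + absz (i - R)%R)%N.
have hJ : forall i, WL (J i) <= i /\ i <= WR (J i) by move=> i; rewrite /WL /WR /J; split; lia.
pose phi : dseq := fun i => sq (J i) i.
have hphi : forall j i, WL j <= i -> i <= WR j -> phi i = sq j i.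
  move=> j i h1 h2; rewrite /phi; have [h3 h4] := hJ i; exact: hagree.
exists phi; split.
  move=> s; have [h1 h2] := pp_le; have [h3 h4] := qq_ge.
  pose j := (absz (s - L)%R + absz (s - R)%R + absz (pp p) + absz (qq q))%N.
  have /Mfin_char [_ he] := Ip_Mfin (hQ j).
  rewrite -(he s); [|rewrite /WL /j; lia|rewrite /WR /j; lia].
  apply: bbl_local => i hi1 hi2; apply: hphi; rewrite /WL /WR /j; lia.
have [z [_ hz]] := hx; apply: functional_extensionality => i; rewrite /Pfin.
case: ifP => hi.
  by move/andP: hi => [h1 h2]; rewrite (hphi 0%N) /WL /WR ?subr0 ?addr0.
by rewrite hz /Pfin /WL /WR subr0 addr0 hi.
Qed.

Lemma unemb_add L0 n (u v : 'rV[F]_(n * d)) j : unemb L0 (u + v) j = unemb L0 u j + unemb L0 v j.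
Proof. by have := unemb_lin L0 1 u v j; rewrite !scale1r. Qed.

Lemma emb_add L0 n (psi phi : dseq) : emb L0 n (fun j => psi j + phi j) = emb L0 n psi + emb L0 n phi.
Proof. by rewrite -[emb L0 n psi]scale1r -emb_lin; congr emb; apply: functional_extensionality => j; rewrite scale1r. Qed.

Definition M0 := mj 0.

Definition fold (psi : dseq) : dseq := fun i =>
  (if i - M0%:Z < L then psi (i - M0%:Z) else 0) + (if R < i + M0%:Z then psi (i + M0%:Z) else 0).

Lemma fold_lin : linD fold.
Proof.
move=> c psi phi; apply: functional_extensionality => i; rewrite /fold.
case: ifP => _; case: ifP => _; rewrite ?scalerDr ?scaler0 ?addr0 ?add0r //.
by rewrite addrACA.
Qed.

Definition Fo := mxf (fun u : 'rV[F]_(Wn M0 * d) => emb L N (fold (unemb (WL M0) u))).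

Lemma FoE (u : 'rV[F]_(Wn M0 * d)) : u *m Fo = emb L N (fold (unemb (WL M0) u)).
Proof. by rewrite mxfE //; apply: lin_window fold_lin. Qed.

Definition Res0 := Res (WL M0) (Wn M0) (WL 0) (Wn 0).
Definition BigK := Kmx (WL M0) (Wn M0).

Lemma Z_props (z : 'rV[F]_(Wn M0 * d)) : (z <= BigK)%MS -> z *m Res0 = 0 ->
  (z *m Fo <= FmM + FpM)%MS /\ (z *m Fo = 0 -> z = 0).
Proof.
move=> hzK hzR.
set psi := unemb (WL M0) z.
have hM : Mfin a p q (WL M0) (WR M0) psi by move/(Kmx_mem _ _ (Wn_t _)): hzK; rewrite Wn_end.
move/Mfin_char: (hM) => [hs he].
have hmid : forall i, L <= i -> i <= R -> psi i = 0.
  have hR := hRN.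
  move: hzR; rewrite ResE => /emb0P h i h1 h2; apply: h; rewrite /WL /Wn; lia.
have [h1 h2] := pp_le; have [h3 h4] := qq_ge; have ht := t_eq; have hR := hRN.
pose gL : dseq := fun i => if i - M0%:Z < L then psi (i - M0%:Z) else 0.
pose gR : dseq := fun i => if R < i + M0%:Z then psi (i + M0%:Z) else 0.
have hgL : FLminus a p q L gL.
  apply/FLm_char; split.
  - move=> i hi; rewrite /gL ifT; last lia.
    by apply: hs; apply/negP => /andP[]; rewrite /WL; lia.
  - move=> j hj; case: (lerP (j - M0%:Z + qq q) R) => hjR.
      rewrite -(he (j - M0%:Z)); [|rewrite /WL; lia|rewrite /WR; lia].
      rewrite -bbl_sh; apply: bbl_local => i hi1 hi2; rewrite /gL /sh.
      case: ifP => // /negbT; rewrite -leNgt => hi; rewrite hmid //; lia.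
    rewrite -(bbl0 j); apply: bbl_local => i hi1 hi2; rewrite /gL ifF //; move: hN; rewrite /N; lia.
  - by exists M0 => i hi; rewrite /gL ifF //; lia.
have hgR : FRplus a p q R gR.
  apply/FRp_char; split.
  - move=> i hi; rewrite /gR ifT; last lia.
    by apply: hs; apply/negP => /andP[]; rewrite /WR; lia.
  - move=> j hj; case: (lerP L (j + M0%:Z + pp p)) => hjL.
      rewrite -(he (j + M0%:Z)); [|rewrite /WL; lia|rewrite /WR; lia].
      rewrite -bbl_sh; apply: bbl_local => i hi1 hi2; rewrite /gR /sh.
      case: ifP => // /negbT; rewrite -leNgt => hi; rewrite hmid //; lia.
    rewrite -(bbl0 j); apply: bbl_local => i hi1 hi2; rewrite /gR ifF //; move: hN; rewrite /N; lia.
  - by exists M0 => i hi; rewrite /gR ifF //; lia.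
have hfold : fold psi = fun i => gL i + gR i by [].
have [hmL huL] := FmM_in hgL; have [hmR huR] := FpM_in hgR.
rewrite FoE hfold emb_add; split; first exact: addmx_sub_adds.
move=> hz0.
have hsL := Fm_supp hgL; have hsR := Fp_supp hgR.
move/FLm_char: hgL => [hL1 _ _]; move/FRp_char: hgR => [hR1 _ _].
have hf0 : forall i, L <= i -> i <= R -> gL i + gR i = 0.
  move: hz0; rewrite -emb_add => /emb0P h i hi1 hi2; apply: h => //; lia.
have gL0 : forall i, gL i = 0.
  move=> i; case: (ltrP i L) => hi; first exact: hL1.
  case: (ltrP i (L + sigma%:Z)) => hi2; last exact: hsL.
  have := hf0 i hi; rewrite hsR ?addr0; [apply; lia | move: hN; rewrite /N; lia].
have gR0 : forall i, gR i = 0.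
  move=> i; case: (ltrP R i) => hi; first exact: hR1.
  case: (lerP i (R - sigma%:Z)) => hi2; first exact: hsR.
  have := hf0 i; rewrite gL0 add0r; apply; move: hN; rewrite /N; lia.
have psi0 : forall i, psi i = 0.
  move=> i; case: (ltrP i L) => hi.
    by have := gL0 (i + M0%:Z); rewrite /gL addrK ifT.
  case: (lerP i R) => hi2; first exact: hmid.
  by have := gR0 (i - M0%:Z); rewrite /gR subrK ifT.
rewrite -(@emb_unemb (WL M0) (Wn M0) z) -/psi -(emb0 (WL M0) (Wn M0)).
by congr emb; apply/fun0P.
Qed.

Lemma htN : (t <= N)%N.
Proof. by move: hN; lia. Qed.

Lemma Kmx_span : (Kmx L N <= Umx + (FmM + FpM))%MS.
Proof.
have hsub : (Umx + (FmM + FpM) <= Kmx L N)%MS.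
  rewrite !addsmx_sub; apply/andP; split; [|apply/andP; split];
    apply/row_subP => i; apply/(Kmx_mem _ _ htN); rewrite -hRN.
  - by have [phi [hphi ->]] := Umx_mem (row_sub i Umx); apply: Pfin_ker_Mfin.
  - exact: Fm_Mfin (FmM_mem (row_sub i _)).
  - exact: Fp_Mfin (FpM_mem (row_sub i _)).
have hdisj : (Umx :&: (FmM + FpM))%MS = 0.
  apply/eqP; rewrite -submx0; apply/row_subP => i.
  have := row_sub i (Umx :&: (FmM + FpM))%MS; rewrite sub_capmx => /andP [hxU hxF].
  set x := row i _ in hxU hxF *.
  case/sub_addsmxP: hxF => [[D1 D2] /= hx].
  have hU := Umx_mem hxU.
  have hV := FmM_mem (submxMl (- D1) FmM).
  have hW := FpM_mem (submxMl (- D2) FpM).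
  have hsum : forall j, unemb L x j + unemb L (- D1 *m FmM) j + unemb L (- D2 *m FpM) j = 0.
    move=> j; rewrite -!unemb_add.
    have -> : x + - D1 *m FmM + - D2 *m FpM = 0 by rewrite hx !mulNmx addrAC addrK subrr.
    by rewrite /unemb big1 // => ? _; rewrite linear0 row0 trmx0; case: ifP.
  have [h0 _ _] := indep3 hU hV hW hsum.
  have -> : x = 0.
    rewrite -(@emb_unemb L N x) -(emb0 L N); congr emb; exact/fun0P.
  by rewrite sub0mx.
pose ZZ := (BigK :&: kermx Res0)%MS.
have hZF : (ZZ :&: kermx Fo)%MS = 0.
  apply/eqP; rewrite -submx0; apply/row_subP => i.
  have := row_sub i (ZZ :&: kermx Fo)%MS; rewrite !sub_capmx => /andP [/andP [hxK hxR] hxF].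
  move: hxR hxF; rewrite !sub_kermx => /eqP hxR /eqP hxF.
  have [_ h] := Z_props hxK hxR; by rewrite h // sub0mx.
have hZr : \rank ZZ = \rank (ZZ *m Fo) by apply/esym/mxrank_injP; rewrite hZF.
have hZs : (ZZ *m Fo <= FmM + FpM)%MS.
  apply/row_subP => i; rewrite row_mul.
  have := row_sub i ZZ; rewrite sub_capmx => /andP [hxK hxR].
  move: hxR; rewrite sub_kermx => /eqP hxR.
  by have [h _] := Z_props hxK hxR.
have hI : (BigK *m Res0 <= Umx)%MS.
  apply/row_subP => i; have := row_sub i (BigK *m Res0).
  move=> /(@Imx_mem 0%N M0) /Q0_ker.
  have -> : WL 0 = L by rewrite /WL subr0.
  by move/Umx_in => [h _]; rewrite emb_unemb in h.
have hr : (\rank (Kmx L N) <= \rank (Umx + (FmM + FpM)))%N.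
  rewrite mxrank_disjoint_sum // (rank_Kmx _ htN) -(rank_Kmx (WL M0) (Wn_t M0)).
  rewrite -/BigK -(mxrank_mul_ker BigK Res0) -/ZZ hZr.
  by apply: leq_add; apply: mxrankS.
have [_ heq] := mxrank_leqif_eq hsub.
have /andP [_ //] : (Umx + (FmM + FpM) == Kmx L N)%MS.
by rewrite -heq eqn_leq mxrankS // hr.
Qed.

Lemma decomp psi : Mfin a p q L R psi ->
  exists u v w, [/\ PkerA a p q L R u, FLminus a p q L v, FRplus a p q R w &
                    psi = (fun j => u j + v j + w j)].
Proof.
move=> hpsi.
have hu : unemb L (emb L N psi) = psi.
  apply: unemb_emb_supp => j hj; move/Mfin_char: hpsi => [hs _]; apply: hs; by rewrite hRN.
have hv : (emb L N psi <= Kmx L N)%MS by apply/(Kmx_mem _ _ htN); rewrite hu -hRN.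
have := submx_trans hv Kmx_span.
case/sub_addsmxP => [[D1 D2] /= hD].
have := submxMl D2 (FmM + FpM)%MS.
case/sub_addsmxP => [[E1 E2] /= hE].
exists (unemb L (D1 *m Umx)), (unemb L (E1 *m FmM)), (unemb L (E2 *m FpM)).
split.
- exact: Umx_mem (submxMl _ _).
- exact: FmM_mem (submxMl _ _).
- exact: FpM_mem (submxMl _ _).
apply: functional_extensionality => j.
by rewrite -hu hD hE !unemb_add addrA.
Qed.

End Window.

End WithK.

End Rank.
End Main.

Theorem mainTheorem11 (F : numClosedFieldType) (d : nat) (hd : (0 < d)%N)
    (p q : int) (a : int -> 'M[F]_d)
    (hpq : p <= q) (hap : a p != 0) (haq : a q != 0)
    (hreg : regular a p q)
    (k : nat) (hk : has_dim (kerA a p q) k)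
    (L R : int) (hLR : L <= R)
    (hN : R - L + 1 >= 2 * ((d%:Z) * tau p q - k%:Z) + tau p q) :
  direct_sum3 (Mfin a p q L R) (PkerA a p q L R) (FLminus a p q L) (FRplus a p q R).
Proof.
have hkle := k_le hpq hreg hk.
have ht : (t p q : int) = tau p q by rewrite t_eq.
have htd : ((t p q * d)%N : int) = d%:Z * tau p q by rewrite PoszM ht mulrC.
have hN' : ((sigma d p q k).*2 + t p q <= absz (R - L + 1)%R)%N.
  rewrite /sigma; lia.
case: (hk) => b [hb [hind hspan]].
split.
  move=> psi; split; first exact: (decomp hpq hreg hk hLR hN' hb hspan).
  move=> [u [v [w [hu hv hw ->]]]].
  have /Mfin_char [hu1 hu2] : Mfin a p q L R u.
    by case: hu => phi [hphi ->]; apply: Pfin_ker_Mfin.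
  have /Mfin_char [hv1 hv2] := Fm_Mfin hpq hreg hk hLR hN' hv.
  have /Mfin_char [hw1 hw2] := Fp_Mfin hpq hreg hk hLR hN' hw.
  apply/Mfin_char; split.
    by move=> j hj; rewrite hu1 ?hv1 ?hw1 // !addr0.
  move=> j h1 h2.
  rewrite (@bbl_add _ _ _ _ _ (fun j => u j + v j) w) (@bbl_add _ _ _ _ _ u v).
  by rewrite hu2 ?hv2 ?hw2 // !addr0.
move=> u v w hu hv hw h0.
have [h1 h2 h3] := indep3 hpq hreg hk hLR hN' hu hv hw (fun j => congr1 (fun f => f j) h0).
by split; apply/fun0P.
Qed.
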